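(* Fix $\alpha\in(0,1]$. For any sequence of labels containing $n$ distinct labels and any regressor values in $[0,1]$ used in the decisions, the tree produced by the online tree construction below (which has $n$ leaves) has depth at most $\dfrac{\log n}{\log(1/\kappa)}+2$ (for $\alpha=1$, where $\kappa=1/2$, this reads $\log_2 n+2$).
   Context: For $p\in[0,1]$, positive integers $L,R$ and $\alpha\in(0,1]$, define $\mathrm{obj}(p,L,R,\alpha)=(1-\alpha)\,2\,(p-\tfrac12)+\alpha\log_2\frac{L}{R}$, and $\kappa=\dfrac{1}{1+2^{1-1/\alpha}}$ (so $\kappa\in[1/2,1)$). Online tree construction: the tree is a rooted binary tree in which every internal node has a left and a right child, and whose leaves correspond one-to-one to the distinct labels seen so far; it starts as a single leaf (the first label). When a label not yet in the tree arrives, it descends from the root: at each internal node, with $L,R$ the current numbers of leaves in its left and right subtrees and $p\in[0,1]$ an arbitrary value (the current regressor prediction at that node), it moves to the right child if $\mathrm{obj}(p,L,R,\alpha)>0$ and to the left child otherwise. On reaching a leaf (holding some label $y'$), that leaf becomes an internal node whose left child is a leaf with label $y'$ and whose right child is a new leaf with the new label. Labels already in the tree do not change its shape. The depth of the tree is the maximum number of edges on a root-to-leaf path. *)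

(* Defs.v *)
From Stdlib Require Import Reals Lra Lia Arith List ListDec.
Import ListNotations.
Open Scope R_scope.

Definition log2R (x : R) : R := ln x / ln 2.

Definition obj (p : R) (L Rr : nat) (alpha : R) : R :=
  (1 - alpha) * 2 * (p - 1/2) + alpha * log2R (INR L / INR Rr).

Definition kappa (alpha : R) : R := 1 / (1 + Rpower 2 (1 - 1 / alpha)).

Inductive tree : Type :=
| Leaf : nat -> tree
| Node : tree -> tree -> tree.

Fixpoint nleaves (t : tree) : nat :=
  match t with Leaf _ => 1%nat | Node l r => (nleaves l + nleaves r)%nat end.

Fixpoint labels (t : tree) : list nat :=
  match t with Leaf y => [y] | Node l r => labels l ++ labels r end.

Fixpoint depth (t : tree) : nat :=
  match t with Leaf _ => 0%nat | Node l r => S (Nat.max (depth l) (depth r)) end.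

(* Descend a new label y from the node at position [pre] (path from the
   root; false = left, true = right).  [p pre] is the regressor prediction
   at that node.  Go right iff obj > 0. *)
Fixpoint descend (alpha : R) (p : list bool -> R) (pre : list bool)
         (y : nat) (t : tree) : tree :=
  match t with
  | Leaf y' => Node (Leaf y') (Leaf y)
  | Node l r =>
      if Rlt_dec 0 (obj (p pre) (nleaves l) (nleaves r) alpha)
      then Node l (descend alpha p (pre ++ [true]) y r)
      else Node (descend alpha p (pre ++ [false]) y l) r
  end.

Definition insert (alpha : R) (p : list bool -> R) (y : nat) (t : tree) : tree :=
  if in_dec Nat.eq_dec y (labels t) then t else descend alpha p [] y t.

(* Process the remaining labels; [ps k] gives the regressor predictions
   (at every node) used when processing the k-th label. *)
Fixpoint build_from (alpha : R) (ps : nat -> list bool -> R) (k : nat)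
         (ys : list nat) (t : tree) : tree :=
  match ys with
  | [] => t
  | y :: ys' => build_from alpha ps (S k) ys' (insert alpha (ps k) y t)
  end.

Definition build (alpha : R) (ps : nat -> list bool -> R) (y0 : nat)
           (ys : list nat) : tree :=
  build_from alpha ps 1%nat ys (Leaf y0).

Definition ndistinct (s : list nat) : nat := length (nodup Nat.eq_dec s).

(* Main.v *)
Require Import Defs.
From Stdlib Require Import Reals List Lra Lia Psatz Permutation.
Import ListNotations.
Open Scope R_scope.

Definition sv (alpha : R) := Rpower 2 (1 - 1 / alpha).

Lemma sv_pos a : 0 < sv a.
Proof. unfold sv, Rpower. apply exp_pos. Qed.

Lemma sv_le1 a : 0 < a <= 1 -> sv a <= 1.
Proof.
  intros H. unfold sv, Rpower. replace 1 with (exp 0) at 3 by apply exp_0.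
  assert (1 <= 1/a). { apply (Rmult_le_reg_r a); [lra|]. field_simplify; lra. }
  assert (0 < ln 2) by (pose proof ln_lt_2; lra).
  assert (Hx : (1 - 1/a) * ln 2 <= 0) by nra.
  destruct Hx as [Hx|Hx].
  - left. apply exp_increasing. exact Hx.
  - rewrite Hx. lra.
Qed.

Lemma ln_sv a : ln (sv a) = (1 - 1/a) * ln 2.
Proof. unfold sv, Rpower. apply ln_exp. Qed.

Lemma nleaves_pos t : (1 <= nleaves t)%nat.
Proof. induction t; simpl; lia. Qed.

Lemma INR_nl_pos t : 1 <= INR (nleaves t).
Proof. apply (le_INR 1). apply nleaves_pos. Qed.

Lemma key a p L Rr : 0 < a <= 1 -> 0 <= p <= 1 -> 1 <= INR L -> 1 <= INR Rr ->
  ln (INR L / INR Rr) = ln (INR L) - ln (INR Rr).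
Proof.
  intros. unfold Rdiv. rewrite ln_mult by (try apply Rinv_0_lt_compat; lra).
  rewrite ln_Rinv by lra. ring.
Qed.

Lemma obj_nonpos a p L Rr : 0 < a <= 1 -> 0 <= p <= 1 -> 1 <= INR L -> 1 <= INR Rr ->
  ~ 0 < obj p L Rr a -> sv a * INR L <= INR Rr.
Proof.
  intros Ha Hp HL HR Ho. apply Rnot_lt_le in Ho. unfold obj, log2R in Ho.
  rewrite (key a p) in Ho by assumption.
  assert (l2 : 0 < ln 2) by (pose proof ln_lt_2; lra).
  set (u := (ln (INR L) - ln (INR Rr)) / ln 2) in *.
  assert (a * u <= 1 - a) by nra.
  assert (u <= 1/a - 1).
  { apply (Rmult_le_reg_l a); [lra|]. field_simplify; lra. }
  assert (Hd : ln (INR L) - ln (INR Rr) = u * ln 2) by (unfold u; field; lra).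
  assert (ln (sv a * INR L) <= ln (INR Rr)).
  { rewrite ln_mult by (try apply sv_pos; lra). rewrite ln_sv. nra. }
  destruct (Rle_lt_dec (sv a * INR L) (INR Rr)) as [?|Hl]; auto.
  apply ln_increasing in Hl; [lra|lra].
Qed.

Lemma obj_pos a p L Rr : 0 < a <= 1 -> 0 <= p <= 1 -> 1 <= INR L -> 1 <= INR Rr ->
  0 < obj p L Rr a -> sv a * INR Rr < INR L.
Proof.
  intros Ha Hp HL HR Ho. unfold obj, log2R in Ho.
  rewrite (key a p) in Ho by assumption.
  assert (l2 : 0 < ln 2) by (pose proof ln_lt_2; lra).
  set (u := (ln (INR L) - ln (INR Rr)) / ln 2) in *.
  assert (a * u > - (1 - a)) by nra.
  assert (u > 1 - 1/a).
  { apply (Rmult_lt_reg_l a); [lra|]. field_simplify; lra. }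
  assert (Hd : ln (INR L) - ln (INR Rr) = u * ln 2) by (unfold u; field; lra).
  assert (ln (sv a * INR Rr) < ln (INR L)).
  { rewrite ln_mult by (try apply sv_pos; lra). rewrite ln_sv. nra. }
  apply ln_lt_inv; auto. pose proof (sv_pos a); nra. lra.
Qed.

Fixpoint bal (s : R) (t : tree) : Prop :=
  match t with
  | Leaf _ => True
  | Node l r => s * INR (nleaves l) <= INR (nleaves r) + s /\
                s * INR (nleaves r) <= INR (nleaves l) + s /\ bal s l /\ bal s r
  end.

Lemma nleaves_descend a p pre y t : nleaves (descend a p pre y t) = S (nleaves t).
Proof.
  revert pre; induction t; intros pre; simpl; auto.
  destruct Rlt_dec; simpl; rewrite ?IHt1, ?IHt2; lia.
Qed.

Lemma labels_descend a p pre y t :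
  Permutation (labels (descend a p pre y t)) (labels t ++ [y]).
Proof.
  revert pre; induction t; intros pre; simpl; auto.
  destruct Rlt_dec; simpl.
  - rewrite <- app_assoc. apply Permutation_app_head. auto.
  - rewrite <- app_assoc. eapply Permutation_trans.
    + apply Permutation_app_tail. apply IHt1.
    + rewrite <- app_assoc. apply Permutation_app_head. apply Permutation_app_comm.
Qed.

Lemma bal_descend a p pre y t : 0 < a <= 1 -> (forall q, 0 <= p q <= 1) ->
  bal (sv a) t -> bal (sv a) (descend a p pre y t).
Proof.
  intros Ha Hp. pose proof (sv_pos a). revert pre; induction t; intros pre; simpl.
  - intros _. simpl. lra.
  - intros (H1 & H2 & B1 & B2).
    pose proof (INR_nl_pos t1); pose proof (INR_nl_pos t2).
    destruct Rlt_dec as [Ho|Ho]; simpl; rewrite nleaves_descend, S_INR.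
    + apply (obj_pos a (p pre)) in Ho; auto. repeat split; auto; nra.
    + apply (obj_nonpos a (p pre)) in Ho; auto. repeat split; auto; nra.
Qed.

Lemma nleaves_labels t : nleaves t = length (labels t).
Proof. induction t; simpl; auto. rewrite length_app; lia. Qed.

Lemma build_inv a ps : 0 < a <= 1 -> (forall k q, 0 <= ps k q <= 1) ->
  forall ys k t, bal (sv a) t -> NoDup (labels t) ->
  bal (sv a) (build_from a ps k ys t) /\ NoDup (labels (build_from a ps k ys t)) /\
  incl (labels (build_from a ps k ys t)) (labels t ++ ys).
Proof.
  intros Ha Hps ys. induction ys as [|y ys IH]; intros k t Hb Hn; simpl.
  - rewrite app_nil_r. repeat split; auto. apply incl_refl.
  - unfold insert. destruct in_dec as [Hi|Hi].
    + destruct (IH (S k) t Hb Hn) as (? & ? & Hinc). repeat split; auto.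
      intros x Hx. apply Hinc in Hx. apply in_app_or in Hx. apply in_or_app.
      destruct Hx; auto. right; right; auto.
    + assert (Hp := labels_descend a (ps k) [] y t).
      destruct (IH (S k) (descend a (ps k) [] y t)) as (? & ? & Hinc).
      * apply bal_descend; auto.
      * eapply Permutation_NoDup. symmetry; exact Hp.
        apply NoDup_app; auto. constructor; auto. constructor.
        intros x H1 H2. destruct H2 as [<-|[]]. auto.
      * repeat split; auto. intros x Hx. apply Hinc in Hx.
        apply in_app_or in Hx. destruct Hx as [Hx|Hx].
        -- eapply Permutation_in in Hx; [|exact Hp]. apply in_app_or in Hx.
           apply in_or_app. destruct Hx as [|[<-|[]]]; auto. right; left; auto.
        -- apply in_or_app. right; right; auto.
Qed.

Lemma depth_bound s t : 0 < s -> bal s t -> (1 <= depth t)%nat ->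
  (1 + s) ^ (depth t - 1) <= INR (nleaves t) - 1.
Proof.
  intros Hs. induction t; simpl; [lia|].
  intros (H1 & H2 & B1 & B2) _.
  pose proof (INR_nl_pos t1); pose proof (INR_nl_pos t2).
  rewrite plus_INR. replace (S (Nat.max (depth t1) (depth t2)) - 1)%nat
    with (Nat.max (depth t1) (depth t2)) by lia.
  destruct (Nat.max_spec (depth t1) (depth t2)) as [[Hlt Hm]|[Hle Hm]]; rewrite Hm.
  - destruct (depth t2) as [|d] eqn:E; [lia|].
    specialize (IHt2 B2 ltac:(lia)).
    replace (S d - 1)%nat with d in IHt2 by lia. simpl.
    pose proof (pow_le (1+s) d ltac:(lra)). nra.
  - destruct (depth t1) as [|d] eqn:E.
    + simpl. lra.
    + specialize (IHt1 B1 ltac:(lia)).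
      replace (S d - 1)%nat with d in IHt1 by lia. simpl.
      pose proof (pow_le (1+s) d ltac:(lra)). nra.
Qed.

Theorem theorem3 (alpha : R) (Halpha : 0 < alpha <= 1)
  (y0 : nat) (ys : list nat) (ps : nat -> list bool -> R)
  (Hps : forall k path, 0 <= ps k path <= 1) :
  INR (depth (build alpha ps y0 ys)) <=
    ln (INR (ndistinct (y0 :: ys))) / ln (1 / kappa alpha) + 2.
Proof.
  unfold build.
  destruct (build_inv alpha ps Halpha Hps ys 1%nat (Leaf y0) I
    ltac:(simpl; constructor; [intros []|constructor])) as (Hb & Hn & Hi).
  set (t := build_from alpha ps 1 ys (Leaf y0)) in *.
  assert (HN : (nleaves t <= ndistinct (y0 :: ys))%nat).
  { rewrite nleaves_labels. unfold ndistinct. apply NoDup_incl_length; auto.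
    intros x Hx. apply nodup_In. apply Hi. exact Hx. }
  assert (Hk : 1 / kappa alpha = 1 + sv alpha).
  { unfold kappa, sv. pose proof (sv_pos alpha). unfold sv in H. field. lra. }
  rewrite Hk. pose proof (sv_pos alpha) as Hs.
  assert (Hlq : 0 < ln (1 + sv alpha)).
  { rewrite <- ln_1. apply ln_increasing; lra. }
  pose proof (INR_nl_pos t) as Hnl.
  assert (HNR : INR (nleaves t) <= INR (ndistinct (y0 :: ys))) by (apply le_INR; auto).
  assert (HlN : 0 <= ln (INR (ndistinct (y0 :: ys)))).
  { destruct (Req_dec (INR (ndistinct (y0 :: ys))) 1) as [E|E].
    - rewrite E, ln_1; lra.
    - left. rewrite <- ln_1. apply ln_increasing; lra. }
  assert (0 <= ln (INR (ndistinct (y0 :: ys))) / ln (1 + sv alpha)).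
  { unfold Rdiv. apply Rmult_le_pos; auto. left; apply Rinv_0_lt_compat; auto. }
  destruct (depth t) as [|D] eqn:ED.
  - simpl. lra.
  - pose proof (depth_bound (sv alpha) t Hs Hb ltac:(lia)) as Hd.
    rewrite ED in Hd. replace (S D - 1)%nat with D in Hd by lia.
    assert (Hpos : 0 < (1 + sv alpha) ^ D) by (apply pow_lt; lra).
    assert (ln ((1 + sv alpha) ^ D) <= ln (INR (ndistinct (y0 :: ys)))).
    { destruct (Rlt_le_dec ((1 + sv alpha) ^ D) (INR (ndistinct (y0 :: ys)))) as [L|L].
      - left; apply ln_increasing; auto.
      - lra. }
    rewrite ln_pow in H0 by lra.
    assert (INR D <= ln (INR (ndistinct (y0 :: ys))) / ln (1 + sv alpha)).
    { apply (Rmult_le_reg_r (ln (1 + sv alpha))); auto. field_simplify; lra. }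
    rewrite S_INR. lra.
Qed.
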